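(* Let $n\geq 2$, $k_n=\lceil\log_2 n\rceil$ (so $n\in(2^{k_n-1},2^{k_n}]$), and let $T_n^{gfb}=(T_a,T_b)$ be the GFB tree with $n$ leaves, where $T_a,T_b$ have $n_a\geq n_b$ leaves. Then: (1) if $n\in(2^{k_n-1},3\cdot2^{k_n-2})$, then $n_a=n-2^{k_n-2}$ and $n_b=2^{k_n-2}$; in particular $T_b$ is the fully balanced tree of height $k_n-2$ and $\lceil\log_2 n_a\rceil=k_n-1$; (2) if $n=3\cdot2^{k_n-2}$, then $n_a=2^{k_n-1}$ and $n_b=2^{k_n-2}$; in particular $T_a$ and $T_b$ are the fully balanced trees of heights $k_n-1$ and $k_n-2$; (3) if $n\in(3\cdot2^{k_n-2},2^{k_n}]$, then $n_a=2^{k_n-1}$ and $n_b=n-2^{k_n-1}$; in particular $T_a$ is the fully balanced tree of height $k_n-1$ and $\lceil\log_2 n_b\rceil=k_n-1$.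
   Context: A rooted binary tree with $n\geq 2$ leaves is a rooted tree whose root has degree 2 and all other internal nodes have degree 3; for $n=1$ it is a single node. Trees are considered up to isomorphism. $T=(T_a,T_b)$ denotes the decomposition into the subtrees rooted at the two children of the root. The fully balanced tree of height $k$ is the rooted binary tree with $2^k$ leaves all at depth $k$. The GFB tree $T_n^{gfb}$ is the output of: start with $n$ single-node trees; while more than one tree remains, remove a tree $u$ of minimal size (number of leaves), then remove a tree $v$ of minimal size among the remaining ones, and insert the tree with a new root whose children are the roots of $u$ and $v$; output the remaining tree. *)

(* Defs.v *)
From Stdlib Require Import Arith List Permutation.
Import ListNotations.

(* Rooted binary trees (plane representation; isomorphism = [iso] below). *)
Inductive tree : Type :=
| Leaf : tree
| Node : tree -> tree -> tree.

Fixpoint size (t : tree) : nat :=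
  match t with
  | Leaf => 1
  | Node a b => size a + size b
  end.

Inductive iso : tree -> tree -> Prop :=
| iso_leaf : iso Leaf Leaf
| iso_keep a b a' b' : iso a a' -> iso b b' -> iso (Node a b) (Node a' b')
| iso_swap a b a' b' : iso a b' -> iso b a' -> iso (Node a b) (Node a' b').

Fixpoint fb (k : nat) : tree :=
  match k with
  | 0 => Leaf
  | S k => Node (fb k) (fb k)
  end.

Definition gfb_step (L L' : list tree) : Prop :=
  exists u v rest,
    Permutation L (u :: v :: rest) /\
    (forall w, In w (v :: rest) -> size u <= size w) /\
    (forall w, In w rest -> size v <= size w) /\
    L' = Node u v :: rest.

Inductive gfb_run : list tree -> tree -> Prop :=
| gfb_done t : gfb_run [t] t
| gfb_more L L' t : gfb_step L L' -> gfb_run L' t -> gfb_run L t.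

Definition is_gfb (n : nat) (T : tree) : Prop := gfb_run (repeat Leaf n) T.

(* Main.v *)
Require Import Defs.
From Stdlib Require Import Arith List Permutation Lia Bool.
Import ListNotations.

Lemma size_fb j : size (fb j) = 2 ^ j.
Proof. induction j; simpl; lia. Qed.

Lemma fbS_fold j : Node (fb j) (fb j) = fb (S j).
Proof. reflexivity. Qed.

Lemma iso_refl t : iso t t.
Proof. induction t; constructor; auto. Qed.

Fixpoint ssum (L : list tree) : nat :=
  match L with [] => 0 | t :: l => size t + ssum l end.

Lemma ssum_perm L L' : Permutation L L' -> ssum L = ssum L'.
Proof. induction 1; simpl; lia. Qed.

Lemma ssum_repeat n : ssum (repeat Leaf n) = n.
Proof. induction n; simpl; lia. Qed.

Lemma run_sum L t : gfb_run L t -> ssum L = size t.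
Proof.
  induction 1; simpl. lia.
  destruct H as [u [v [rest [Hp [_ [_ ->]]]]]].
  rewrite (ssum_perm _ _ Hp). simpl in *. lia.
Qed.

Definition isXb j w := andb (Nat.ltb (2^j) (size w)) (Nat.ltb (size w) (2^(S j))).

Lemma isXb_spec j w : isXb j w = true <-> 2^j < size w < 2^(S j).
Proof.
  unfold isXb. rewrite andb_true_iff, !Nat.ltb_lt. tauto.
Qed.

Lemma isXb_fb j : isXb j (fb j) = false.
Proof.
  destruct (isXb j (fb j)) eqn:E; auto. apply isXb_spec in E. rewrite size_fb in E. lia.
Qed.

Lemma isXb_fbS j : isXb j (fb (S j)) = false.
Proof.
  destruct (isXb j (fb (S j))) eqn:E; auto. apply isXb_spec in E. rewrite size_fb in E. lia.
Qed.

Lemma filter_len_perm (f : tree -> bool) l l' : Permutation l l' ->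
  length (filter f l) = length (filter f l').
Proof.
  induction 1; simpl; auto.
  - destruct (f x); simpl; auto.
  - destruct (f x), (f y); simpl; auto.
  - lia.
Qed.

Lemma filter_nil_false (f : tree -> bool) l : length (filter f l) = 0 ->
  forall x, In x l -> f x = false.
Proof.
  intros H x Hx. destruct (f x) eqn:E; auto.
  assert (In x (filter f l)) by (apply filter_In; auto).
  destruct (filter f l); simpl in *; [contradiction | lia].
Qed.

Lemma filter_false_nil (f : tree -> bool) l : (forall x, In x l -> f x = false) ->
  length (filter f l) = 0.
Proof.
  induction l; simpl; intros H; auto.
  rewrite H by auto. apply IHl. auto.
Qed.

Lemma filter_cons_le (f : tree -> bool) x l :
  length (filter f (x :: l)) <= S (length (filter f l)).
Proof. simpl. destruct (f x); simpl; lia. Qed.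

Definition cls j w := w = fb j \/ w = fb (S j) \/ (2^j < size w < 2^(S j)).

Definition Inv L := exists j, (forall w, In w L -> cls j w) /\
  length (filter (isXb j) L) <= 1.

Definition good u v := exists j,
  (u = fb j /\ v = fb j) \/ (u = fb j /\ v = fb (S j)) \/
  (u = fb j /\ 2^j < size v < 2^(S j)) \/
  (2^j < size u < 2^(S j) /\ v = fb (S j)).

Lemma cls_big j w : cls j w -> 2^(S j) <= size w -> w = fb (S j).
Proof.
  assert (Hp0 : 0 < 2^j) by (apply Nat.neq_0_lt_0, Nat.pow_nonzero; lia).
  intros [E|[E|E]] H; subst; auto; rewrite ?size_fb in *; simpl in *; lia.
Qed.

Lemma cls_mid j w : cls j w -> 2^j < size w -> isXb j w = false -> w = fb (S j).
Proof.
  intros [E|[E|E]] H Hx; subst; auto.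
  - rewrite size_fb in H. lia.
  - apply isXb_spec in E. congruence.
Qed.

Lemma cls_X j w : 2^j < size w < 2^(S j) -> isXb j w = true.
Proof. intros; apply isXb_spec; auto. Qed.

Lemma step_inv L u v rest : Inv L -> Permutation L (u::v::rest) ->
  (forall w, In w (v::rest) -> size u <= size w) ->
  (forall w, In w rest -> size v <= size w) ->
  Inv (Node u v :: rest) /\ (rest = [] -> good u v).
Proof.
  intros [j [Hc Hf]] Hp Hu Hv.
  assert (Hc' : forall w, In w (u::v::rest) -> cls j w).
  { intros w Hw. apply Hc. eapply Permutation_in; [symmetry; exact Hp | exact Hw]. }
  assert (Hf' : length (filter (isXb j) (u::v::rest)) <= 1).
  { rewrite <- (filter_len_perm _ _ _ Hp). exact Hf. }
  assert (Hpos : 0 < 2^j) by (apply Nat.neq_0_lt_0, Nat.pow_nonzero; lia).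
  assert (H2 : 2^(S j) = 2 * 2^j) by reflexivity.
  assert (H4 : 2^(S (S j)) = 2 * (2 * 2^j)) by reflexivity.
  assert (Cu := Hc' u ltac:(simpl; auto)).
  assert (Cv := Hc' v ltac:(simpl; auto)).
  assert (Cr : forall w, In w rest -> cls j w) by (intros; apply Hc'; simpl; auto).
  destruct Cu as [Eu|[Eu|Xu]].
  - subst u. rewrite size_fb in Hu.
    destruct Cv as [Ev|[Ev|Xv]].
    + subst v. split; [|intros; exists j; auto].
      exists j. split.
      * intros w [<-|Hw]; [right; left; reflexivity | auto].
      * simpl in *. rewrite isXb_fbS. rewrite !isXb_fb in Hf'. exact Hf'.
    + subst v. rewrite size_fb in Hv.
      assert (Er : forall w, In w rest -> w = fb (S j)).
      { intros w Hw. apply cls_big; auto. }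
      split; [|intros; exists j; auto].
      exists (S j). split.
      * intros w [<-|Hw].
        -- right; right. simpl size. rewrite !size_fb. rewrite H4, H2. lia.
        -- left. auto.
      * eapply Nat.le_trans; [apply filter_cons_le|].
        rewrite filter_false_nil; auto. intros x Hx. rewrite (Er x Hx). apply isXb_fb.
    + simpl in Hf'. rewrite isXb_fb, (cls_X _ _ Xv) in Hf'. simpl in Hf'.
      assert (Hr0 := filter_nil_false (isXb j) rest ltac:(lia)).
      assert (Er : forall w, In w rest -> w = fb (S j)).
      { intros w Hw. apply cls_mid; auto. specialize (Hv w Hw). lia. }
      split; [|intros; exists j; auto].
      exists (S j). split.
      * intros w [<-|Hw].
        -- right; right. simpl size. rewrite !size_fb. rewrite H4. rewrite H2 in *. lia.
        -- left. auto.
      * eapply Nat.le_trans; [apply filter_cons_le|].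
        rewrite filter_false_nil; auto. intros x Hx. rewrite (Er x Hx). apply isXb_fb.
  - subst u. rewrite size_fb in Hu.
    assert (Er : forall w, In w (v::rest) -> w = fb (S j)).
    { intros w Hw. apply cls_big; auto. apply Hc'. simpl in *; tauto. }
    assert (v = fb (S j)) by (apply Er; simpl; auto). subst v.
    split; [|intros; exists (S j); auto].
    exists (S j). split.
    * intros w [<-|Hw].
      -- right; left. reflexivity.
      -- left. apply Er. simpl; auto.
    * eapply Nat.le_trans; [apply filter_cons_le|].
      rewrite filter_false_nil; auto. intros x Hx. rewrite (Er x ltac:(simpl; auto)). apply isXb_fb.
  - simpl in Hf'. rewrite (cls_X _ _ Xu) in Hf'. change (S (length (filter (isXb j) (v::rest))) <= 1) in Hf'.
    assert (Hr0 := filter_nil_false (isXb j) (v::rest) ltac:(lia)).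
    assert (Er : forall w, In w (v::rest) -> w = fb (S j)).
    { intros w Hw. apply cls_mid; auto. apply Hc'. simpl in *; tauto.
      specialize (Hu w Hw). lia. }
    assert (v = fb (S j)) by (apply Er; simpl; auto). subst v.
    split; [|intros; exists j; auto].
    exists (S j). split.
    * intros w [<-|Hw].
      -- right; right. simpl size. rewrite !size_fb. rewrite H4, H2. rewrite H2 in Xu. lia.
      -- left. apply Er. simpl; auto.
    * eapply Nat.le_trans; [apply filter_cons_le|].
      rewrite filter_false_nil; auto. intros x Hx. rewrite (Er x ltac:(simpl; auto)). apply isXb_fb.
Qed.

Lemma run_single x t : gfb_run [x] t -> t = x.
Proof.
  intros H. inversion H; subst; auto.
  destruct H0 as [u [v [rest [Hp _]]]]. apply Permutation_length in Hp. simpl in Hp. lia.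
Qed.

Lemma run_good L t : gfb_run L t -> Inv L -> 2 <= length L ->
  exists u v, t = Node u v /\ good u v.
Proof.
  induction 1; intros HI Hl.
  - simpl in Hl. lia.
  - destruct H as [u [v [rest [Hp [Hu [Hv ->]]]]]].
    destruct (step_inv _ _ _ _ HI Hp Hu Hv) as [HI' Hg].
    destruct rest as [|r rest].
    + apply run_single in H0. subst. exists u, v. auto.
    + apply IHgfb_run; auto. simpl; lia.
Qed.

Lemma init_inv n : Inv (repeat Leaf n).
Proof.
  exists 0. split.
  - intros w Hw. apply repeat_spec in Hw. subst. left. reflexivity.
  - rewrite filter_false_nil; auto. intros x Hx. apply repeat_spec in Hx. subst. reflexivity.
Qed.

Theorem proposition2 (n : nat) (T Ta Tb : tree) :
  2 <= n ->
  is_gfb n T ->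
  (T = Node Ta Tb \/ T = Node Tb Ta) ->
  size Tb <= size Ta ->
  let k := Nat.log2_up n in
  (* (1) n in (2^(k-1), 3*2^(k-2)), written as 2^k < 2n < ... *)
  (2 ^ k < 2 * n -> 4 * n < 3 * 2 ^ k ->
     size Ta = n - 2 ^ (k - 2) /\ size Tb = 2 ^ (k - 2) /\
     iso Tb (fb (k - 2)) /\ Nat.log2_up (size Ta) = k - 1) /\
  (* (2) n = 3*2^(k-2) *)
  (4 * n = 3 * 2 ^ k ->
     size Ta = 2 ^ (k - 1) /\ size Tb = 2 ^ (k - 2) /\
     iso Ta (fb (k - 1)) /\ iso Tb (fb (k - 2))) /\
  (* (3) n in (3*2^(k-2), 2^k] *)
  (3 * 2 ^ k < 4 * n -> n <= 2 ^ k ->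
     size Ta = 2 ^ (k - 1) /\ size Tb = n - 2 ^ (k - 1) /\
     iso Ta (fb (k - 1)) /\ Nat.log2_up (size Tb) = k - 1).
Proof.
  intros Hn Hg HT Hle. cbv zeta.
  destruct (run_good _ _ Hg (init_inv n) ltac:(rewrite repeat_length; lia))
    as [u [v [Et [j Hgood]]]].
  assert (Hs := run_sum _ _ Hg). rewrite ssum_repeat in Hs.
  subst T. simpl in Hs.
  assert (Hpos : 0 < 2^j) by (apply Nat.neq_0_lt_0, Nat.pow_nonzero; lia).
  assert (H2 : 2^(S j) = 2 * 2^j) by reflexivity.
  assert (H4 : 2^(S (S j)) = 2 * (2 * 2^j)) by reflexivity.
  assert (Hmid : forall x, 2^j < x < 2^(S j) -> Nat.log2_up x = S j).
  { intros x Hx. apply Nat.log2_up_unique. destruct j; simpl in *; lia. simpl Nat.pred. lia. }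
  destruct Hgood as [[-> ->]|[[-> ->]|[[-> Xv]|[Xu ->]]]];
  rewrite ?size_fb in Hs.
  -
    assert (Hk : Nat.log2_up n = S j) by (replace n with (2^(S j)) by (rewrite H2; lia); apply Nat.log2_up_pow2; lia).
    rewrite Hk. replace (S j - 1) with j by lia.
    destruct HT as [E|E]; injection E; intros; subst Ta Tb; rewrite ?fbS_fold in *; rewrite ?size_fb;
    rewrite H2; rewrite Nat.log2_up_pow2 by lia;
    (split; [intros; lia | split; [intros; lia | intros; repeat split; auto using iso_refl; lia]]).
  - assert (Hk : Nat.log2_up n = S (S j)) by (apply Nat.log2_up_unique; simpl; lia).
    rewrite Hk. replace (S (S j) - 1) with (S j) by lia. replace (S (S j) - 2) with j by lia.
    rewrite H4, H2.
    destruct HT as [E|E]; injection E; intros; subst Ta Tb; rewrite ?fbS_fold in *; rewrite ?size_fb in *; rewrite ?H2 in *;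
    [lia|].
    split; [intros; lia | split; [intros; repeat split; auto using iso_refl; lia | intros; lia]].
  - assert (Hk : Nat.log2_up n = S (S j)) by (apply Nat.log2_up_unique; simpl; lia).
    rewrite Hk. replace (S (S j) - 1) with (S j) by lia. replace (S (S j) - 2) with j by lia.
    rewrite H4. rewrite H2 in Xv.
    destruct HT as [E|E]; injection E; intros; subst Ta Tb; rewrite ?fbS_fold in *; rewrite ?size_fb in *;
    [lia|].
    split; [intros; repeat split; auto using iso_refl; try lia; apply Hmid; rewrite H2; lia
           | split; intros; lia].
  - assert (Hk : Nat.log2_up n = S (S j)) by (apply Nat.log2_up_unique; simpl; lia).
    rewrite Hk. replace (S (S j) - 1) with (S j) by lia. replace (S (S j) - 2) with j by lia.
    rewrite H4, H2. rewrite H2 in Xu, Hs.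
    destruct HT as [E|E]; injection E; intros; subst Ta Tb; rewrite ?fbS_fold in *; rewrite ?size_fb in *; rewrite ?H2 in *;
    [lia|].
    split; [intros; lia | split; [intros; lia | intros; repeat split; auto using iso_refl; try lia; apply Hmid; rewrite H2; lia]].
Qed.
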